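(* There is no nontrivial valued Abelian group of exponent $3$ which, with the metric $(x,y)\mapsto p(x-y)$ induced by its value $p$, is Urysohn as a metric space.
   Context: A value on an Abelian group $G$ is $p\colon G\to[0,\infty)$ with $p(x)=0\iff x=0$, $p(-x)=p(x)$, $p(x+y)\leqslant p(x)+p(y)$. A group has exponent $3$ if $3x=0$ for all $x$. A metric space $X$ is Urysohn if (U0) it is separable and complete, (U1) every separable metric space of diameter no greater than $\mathrm{diam}\,X$ isometrically embeds into $X$, and (U2) every isometry between two finite subsets of $X$ extends to an isometry of $X$ onto $X$. *)

(* Defs.v *)
From Stdlib Require Import Reals List.
From mathcomp Require Import all_boot all_algebra.
Set Implicit Arguments. Unset Strict Implicit. Unset Printing Implicit Defensive.

Open Scope R_scope.

Definition is_value (G : zmodType) (p : G -> R) : Prop :=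
  (forall x, 0 <= p x) /\
  (forall x, p x = 0 <-> x = 0%R) /\
  (forall x, p (- x)%R = p x) /\
  (forall x y, p (x + y)%R <= p x + p y).

Definition exponent3 (G : zmodType) : Prop := forall x : G, (x *+ 3)%R = 0%R.

Definition value_metric (G : zmodType) (p : G -> R) : G -> G -> R :=
  fun x y => p (x - y)%R.

Definition is_metric (T : Type) (d : T -> T -> R) : Prop :=
  (forall x y, 0 <= d x y) /\
  (forall x y, d x y = 0 <-> x = y) /\
  (forall x y, d x y = d y x) /\
  (forall x y z, d x z <= d x y + d y z).

(* Separable: a countable dense subset (the empty space is separable). *)
Definition separable (T : Type) (d : T -> T -> R) : Prop :=
  T -> exists s : nat -> T, forall x eps, 0 < eps -> exists n, d x (s n) < eps.

Definition cauchy (T : Type) (d : T -> T -> R) (u : nat -> T) : Prop :=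
  forall eps, 0 < eps -> exists N, forall m n, (N <= m)%nat -> (N <= n)%nat ->
    d (u m) (u n) < eps.

Definition converges_to (T : Type) (d : T -> T -> R) (u : nat -> T) (l : T) : Prop :=
  forall eps, 0 < eps -> exists N, forall n, (N <= n)%nat -> d (u n) l < eps.

Definition complete (T : Type) (d : T -> T -> R) : Prop :=
  forall u, cauchy d u -> exists l, converges_to d u l.

(* diam Y <= diam X, where diam = sup of distances (in [0, +oo]):
   every distance in Y is bounded by the supremum of distances in X. *)
Definition diam_le (Y X : Type) (dY : Y -> Y -> R) (dX : X -> X -> R) : Prop :=
  forall y1 y2 r, r < dY y1 y2 -> exists x1 x2, r < dX x1 x2.

Definition isometric (Y X : Type) (dY : Y -> Y -> R) (dX : X -> X -> R) (f : Y -> X) : Prop :=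
  forall a b, dX (f a) (f b) = dY a b.

Definition Urysohn (T : Type) (d : T -> T -> R) : Prop :=
  is_metric d /\
  separable d /\ complete d /\
  (forall (Y : Type) (dY : Y -> Y -> R), is_metric dY -> separable dY ->
     diam_le dY d -> exists f : Y -> T, isometric dY d f) /\
  (* (U2): an isometry g between the finite set {l} and its image extends
     to an isometry of T onto T. *)
  (forall (l : list T) (g : T -> T),
     (forall a b, In a l -> In b l -> d (g a) (g b) = d a b) ->
     exists h : T -> T, isometric d d h /\ (forall y, exists x, h x = y) /\
       (forall a, In a l -> h a = g a)).

(* Main.v *)
Require Import Defs.
From Stdlib Require Import Reals List Lra.
From mathcomp Require Import all_boot all_algebra.
Import GRing.Theory.
Open Scope R_scope.

Inductive pts := PA | PB | PC | PW.

Definition dY (r0 : R) (u v : pts) : R :=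
  match u, v with
  | PA, PA | PB, PB | PC, PC | PW, PW => 0
  | PA, PB | PB, PA | PA, PC | PC, PA | PB, PC | PC, PB => 3 * r0 / 4
  | PW, PA | PA, PW => r0
  | _, _ => 3 * r0 / 8
  end.

Lemma dY_metric r0 : 0 < r0 -> is_metric (dY r0).
Proof.
move=> h; split; [|split; [|split]].
- by case; case => /=; lra.
- case; case => /=; split => // H; (discriminate || lra).
- by case; case.
- by case; case; case => /=; lra.
Qed.

Lemma dY_sep r0 : separable (dY r0).
Proof.
move=> _; exists (fun n => match n with 0 => PA | 1 => PB | 2 => PC | _ => PW end)%nat.
move=> x eps he; case: x.
- by exists 0%nat => /=.
- by exists 1%nat => /=.
- by exists 2%nat => /=.
- by exists 3%nat => /=.
Qed.

Lemma key (G : zmodType) (w a b : G) : (forall x : G, (x *+ 3)%R = 0%R) ->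
  (- (w - a))%R = ((w - b) + (w - (- a - b)))%R.
Proof.
move=> e3; have := e3 w; rewrite !mulrS mulr0n addr0 => hw.
apply/eqP; rewrite -subr_eq0; apply/eqP.
rewrite !opprD !opprK.
rewrite !addrA (@GRing.add G).[ACl ((2*6)*(4*7)*(1*3*5))] !subrr !add0r.
by rewrite -!opprD -addrA hw oppr0.
Qed.

Lemma neg3 (G : zmodType) (x : G) : exponent3 G -> (- x - x - x = 0)%R.
Proof.
move=> e3; have := e3 x; rewrite !mulrS mulr0n addr0 => h.
by rewrite -!opprD -addrA h oppr0.
Qed.

Lemma L1 (G : zmodType) (a b : G) : exponent3 G -> (- a - b - a = a - b)%R.
Proof.
move=> e3; apply/eqP; rewrite -subr_eq0; apply/eqP; rewrite !opprD !opprK !addrA.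
by rewrite (@GRing.add G).[ACl ((2*5)*(1*3*4))] addNr add0r neg3.
Qed.

Lemma L2 (G : zmodType) (a b : G) : exponent3 G -> (- a - b - b = b - a)%R.
Proof.
move=> e3; apply/eqP; rewrite -subr_eq0; apply/eqP; rewrite !opprD !opprK !addrA.
by rewrite (@GRing.add G).[ACl ((1*5)*(2*3*4))] addNr add0r neg3.
Qed.

Theorem proposition2p18 (G : zmodType) (p : G -> R) :
  is_value p -> exponent3 G -> (exists x : G, x <> 0%R) ->
  ~ Urysohn (value_metric p).
Proof.
move=> [p0 [pz [pn pt]]] e3 [x0 nx0] [_ [_ [_ [U1 U2]]]].
set r0 := p x0.
have r0pos : 0 < r0.
  have := p0 x0; rewrite /r0 => h; case: h => // h.
  by exfalso; apply: nx0; apply/pz.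
have pzero : p 0%R = 0 by apply/pz.
have [f iso] : exists f : pts -> G, isometric (dY r0) (value_metric p) f.
  apply: U1; [exact: dY_metric | exact: dY_sep |].
  move=> y1 y2 r hr; exists x0, 0%R; rewrite /value_metric subr0 -/r0.
  move: hr; case: y1; case: y2 => /=; lra.
set a := f PA; set b := f PB; set c := f PC.
set c' := (- a - b)%R.
have dac : a <> c.
  move=> e; have := iso PA PC; rewrite -/a -/c e /value_metric subrr pzero /=; lra.
have dbc : b <> c.
  move=> e; have := iso PB PC; rewrite -/b -/c e /value_metric subrr pzero /=; lra.
pose g := fun z : G => if z == c then c' else z.
have ga : g a = a by rewrite /g; case: eqP.
have gb : g b = b by rewrite /g; case: eqP.
have gc : g c = c' by rewrite /g eqxx.
have e3' : forall x : G, (x *+ 3)%R = 0%R := e3.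
have hca : value_metric p c' a = 3 * r0 / 4.
  rewrite /value_metric /c' L1 //; have := iso PA PB; rewrite /= /value_metric -/a -/b //.
have hcb : value_metric p c' b = 3 * r0 / 4.
  rewrite /value_metric /c' L2 //; have := iso PB PA; rewrite /= /value_metric -/a -/b //.
have [h [isoh [_ hext]]] : exists h : G -> G, isometric (value_metric p) (value_metric p) h /\
       (forall y, exists x, h x = y) /\ (forall z, In z [:: a; b; c] -> h z = g z).
  apply: U2 => u v /= hu hv.
  have sym : forall x y, value_metric p x y = value_metric p y x.
    by move=> x y; rewrite /value_metric -opprB pn.
  have hac : value_metric p c a = 3 * r0 / 4 by have := iso PC PA.
  have hbc' : value_metric p c b = 3 * r0 / 4 by have := iso PC PB.
  case: hu => [<-|[<-|[<-|[]]]]; case: hv => [<-|[<-|[<-|[]]]];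
    rewrite ?ga ?gb ?gc //.
  - by rewrite sym hca sym hac.
  - by rewrite sym hcb sym hbc'.
  - by rewrite hca hac.
  - by rewrite hcb hbc'.
  - by rewrite /value_metric !subrr.
set w := h (f PW).
have wa : p (w - a)%R = r0.
  have := isoh (f PW) a; rewrite /value_metric -/w hext /= ?ga; last by left.
  by move=> ->; have := iso PW PA.
have wb : p (w - b)%R = 3 * r0 / 8.
  have := isoh (f PW) b; rewrite /value_metric -/w hext /= ?gb; last by right; left.
  by move=> ->; have := iso PW PB.
have wc : p (w - c')%R = 3 * r0 / 8.
  have := isoh (f PW) c; rewrite /value_metric -/w hext /= ?gc; last by right; right; left.
  by move=> ->; have := iso PW PC.
have := pt (w - b)%R (w - c')%R.
rewrite -key // pn; lra.
Qed.
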